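(* Let $N$ be a conditionally acyclic TCP-net over variables $V$ in which every CPT order $\succ^X_p$ has a greatest element, and let $\mathbf{x}$ be a (possibly empty) assignment to a subset $\mathbf{X}\subseteq V$. Let $o$ be the outcome produced by the forward sweep procedure: traverse the variables in a topological order of the directed graph $(V,\mathsf{cp})$, keep the value given by $\mathbf{x}$ for variables in $\mathbf{X}$, and set each other variable $X$ to the greatest element of $\succ^X_p$, where $p$ is the (already fixed) assignment to $Pa(X)$. Then $o\in Comp(\mathbf{x})$ and $o$ is the most preferred outcome in $Comp(\mathbf{x})$, i.e. $N\models o\succ o'$ for every $o'\in Comp(\mathbf{x})$ with $o'\neq o$.
   Context: Let $V$ be a finite set of variables, each $X$ with a finite nonempty domain $D(X)$; for $U\subseteq V$, $D(U)$ is the set of assignments to $U$, an outcome is an element of $D(V)$, and juxtaposition of assignments to disjoint sets denotes their combination. For an assignment $\mathbf{x}$ to $\mathbf{X}\subseteq V$, $Comp(\mathbf{x})$ is the set of outcomes extending $\mathbf{x}$. A TCP-net is a tuple $N=\langle V,\mathsf{cp},\mathsf{i},\mathsf{ci},\mathsf{cpt},\mathsf{cit}\rangle$ where: $\mathsf{cp}$ is a set of directed cp-arcs $(X,Y)$ between distinct variables, with $Pa(X)=\{X' : (X',X)\in\mathsf{cp}\}$; $\mathsf{i}$ is a set of directed i-arcs $(X,Y)$ between distinct variables; $\mathsf{ci}$ is a set of undirected ci-arcs $\{X,Y\}$ between distinct variables, each with a nonempty selector set $S(X,Y)\subseteq V\setminus\{X,Y\}$; $\mathsf{cpt}$ assigns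 to each $X$ a table $CPT(X)$ mapping each $p\in D(Pa(X))$ to a strict partial order $\succ^X_p$ on $D(X)$ (for an assignment $u$ fixing the values of $Pa(X)$, $\succ^X_u$ denotes $\succ^X_p$ for the values $p$ that $u$ gives to $Pa(X)$); $\mathsf{cit}$ assigns to each ci-arc $\gamma=\{X,Y\}$ a table $CIT(\gamma)$, a possibly partial map from $D(S(X,Y))$ to $\{X\rhd Y,\ Y\rhd X\}$. A strict partial order $\succ$ on $D(V)$ satisfies $CPT(X)$ iff for all $p\in D(Pa(X))$, all $w\in D(V\setminus(\{X\}\cup Pa(X)))$ and all $x,x'\in D(X)$ with $x\succ^X_p x'$: $xpw\succ x'pw$. It satisfies an i-arc $(X,Y)$ iff for every $w\in D(V\setminus\{X,Y\})$, all $x,x'\in D(X)$ with $x\succ^X_w x'$ and all $y,y'\in D(Y)$: $xyw\succ x'y'w$. It satisfies $CIT(\gamma)$ for a ci-arc $\gamma=\{X,Y\}$ with $Z=S(X,Y)$ iff for every $z\in D(Z)$ at which $CIT(\gamma)$ is defined and equals $X\rhd Y$, every $w\in D(V\setminus(\{X,Y\}\cup Z))$, all $x,x'$ with $x\succ^X_{zw}x'$ and all $y,y'\in D(Y)$: $xyzw\succ x'y'zw$ (symmetrically for $Y\rhd X$). $\succ$ satisfies $N$ iff it satisfies every CPT, i-arc and CIT; $N\models o\succ o'$ means $o\succ o'$ holds in every strict partial order on $D(V)$ satisfying $N$. The dependency graph $N^\star$ has vertex set $V$, the cp-arcs and i-arcs as directed edges, the ci-arcs as undirected edges, and additionally, for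 every ci-arc $\{X_i,X_j\}$ and every $X_k\in S(X_i,X_j)$, the directed edges $(X_k,X_i)$ and $(X_k,X_j)$ (if not already present). Let $S(N)$ be the union of all selector sets. For $w\in D(S(N))$, the $w$-directed graph of $N^\star$ consists of the vertices and directed edges of $N^\star$ together with, for every ci-arc $\{X_i,X_j\}$ whose CIT maps the restriction of $w$ to $S(X_i,X_j)$ to $X_i\rhd X_j$, a directed edge $(X_i,X_j)$ (if not already present). $N$ is conditionally acyclic iff every $w$-directed graph is acyclic. *)

(* Defs.v *)
From mathcomp Require Import all_boot.
Set Implicit Arguments. Unset Strict Implicit. Unset Printing Implicit Defensive.

Section TCP.
Variables (V : finType) (D : V -> finType).

Definition outcome := forall v : V, D v.

Definition upd (o : outcome) (X : V) (a : D X) : outcome :=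
  @dfwith V (fun v => D v) o X a.

(* partial assignment x to the subset {v | x v <> None} of V *)
Definition passign := forall v : V, option (D v).

Definition Comp (x : passign) (o : outcome) : Prop :=
  forall v a, x v = Some a -> o v = a.

(* TCP-net data.
   - cp X Y   : cp-arc (X,Y);  Pa(X) = [set Y | cp Y X]
   - iarc X Y : i-arc (X,Y)
   - ciarc X Y: undirected ci-arc {X,Y} (symmetric relation)
   - sel X Y  : selector set S(X,Y)
   - cpt X o  : the order >^X_p, where p = restriction of o to Pa(X)
                (well-formedness demands it depends only on Pa(X))
   - cit X Y o: CIT({X,Y}) is defined at the restriction z of o to S(X,Y)
                and maps it to X |> Y (depends only on S(X,Y)). *)
Record tcpnet := TCPNet {
  cp : rel V;
  iarc : rel V;
  ciarc : rel V;
  sel : V -> V -> {set V};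
  cpt : forall X : V, outcome -> rel (D X);
  cit : V -> V -> outcome -> bool
}.
Arguments cpt t X o : clear implicits.

Definition strict_porder (T : Type) (r : T -> T -> Prop) : Prop :=
  (forall a, ~ r a a) /\ (forall a b c, r a b -> r b c -> r a c).

Definition wf_tcpnet (N : tcpnet) : Prop :=
  (forall X, 0 < #|D X|) /\
  (forall X, ~~ cp N X X) /\ (forall X, ~~ iarc N X X) /\
  (forall X, ~~ ciarc N X X) /\ (forall X Y, ciarc N X Y = ciarc N Y X) /\
  (forall X Y, sel N X Y = sel N Y X) /\
  (forall X Y, ciarc N X Y ->
     [/\ sel N X Y != set0, X \notin sel N X Y & Y \notin sel N X Y]) /\
  (forall X (o1 o2 : outcome), (forall Y, cp N Y X -> o1 Y = o2 Y) ->
     forall a b, cpt N X o1 a b = cpt N X o2 a b) /\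
  (forall X (o : outcome), strict_porder (fun a b => cpt N X o a b)) /\
  (* CITs: possibly partial maps D(S(X,Y)) -> {X |> Y, Y |> X} *)
  (forall X Y (o : outcome), cit N X Y o -> ciarc N X Y) /\
  (forall X Y (o : outcome), ~~ (cit N X Y o && cit N Y X o)) /\
  (forall X Y (o1 o2 : outcome), (forall Z, Z \in sel N X Y -> o1 Z = o2 Z) ->
     cit N X Y o1 = cit N X Y o2).

Definition sat_cpt (N : tcpnet) (R : outcome -> outcome -> Prop) (X : V) :=
  forall (o : outcome) (a a' : D X), cpt N X o a a' -> R (upd o a) (upd o a').

Definition sat_iarc (N : tcpnet) (R : outcome -> outcome -> Prop) (X Y : V) :=
  forall (o : outcome) (a a' : D X) (b b' : D Y), cpt N X o a a' ->
    R (upd (upd o a) b) (upd (upd o a') b').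

Definition sat_cit (N : tcpnet) (R : outcome -> outcome -> Prop) (X Y : V) :=
  forall (o : outcome) (a a' : D X) (b b' : D Y), cit N X Y o -> cpt N X o a a' ->
    R (upd (upd o a) b) (upd (upd o a') b').

Definition sat (N : tcpnet) (R : outcome -> outcome -> Prop) : Prop :=
  (forall X, sat_cpt N R X) /\
  (forall X Y, iarc N X Y -> sat_iarc N R X Y) /\
  (forall X Y, ciarc N X Y -> sat_cit N R X Y /\ sat_cit N R Y X).

Definition entails (N : tcpnet) (o o' : outcome) : Prop :=
  forall R : outcome -> outcome -> Prop, strict_porder R -> sat N R -> R o o'.

(* the w-directed graph of N*, for w given as (the restriction of) an outcome *)
Definition wgraph (N : tcpnet) (w : outcome) : rel V :=
  fun X Y =>
    [|| cp N X Y, iarc N X Y,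
        [exists Z, ciarc N Y Z && (X \in sel N Y Z)]
      | cit N X Y w].

Definition acyclic (e : rel V) : Prop :=
  forall X Y, e X Y -> ~~ connect e Y X.

Definition cond_acyclic (N : tcpnet) : Prop :=
  forall w : outcome, acyclic (wgraph N w).

Definition has_greatest (T : finType) (r : rel T) : Prop :=
  exists g, forall a, a != g -> r g a.

Definition topo_order (N : tcpnet) (s : seq V) : Prop :=
  [/\ uniq s, forall v, v \in s &
      forall X Y, cp N X Y -> index X s < index Y s].

Definition greatest_of (N : tcpnet) (X : V) (o : outcome) : option (D X) :=
  [pick g : D X | [forall a : D X, (a != g) ==> cpt N X o g a]].

Definition sweep_step (N : tcpnet) (x : passign) (o : outcome) (X : V)
  : outcome :=
  match x X with
  | Some a => upd o a
  | None => match greatest_of N X o with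
            | Some g => upd o g
            | None => o
            end
  end.

(* run the sweep along s, starting from an arbitrary initial outcome o0
   (every variable gets overwritten exactly once along a topological order) *)
Definition forward_sweep (N : tcpnet) (x : passign) (s : seq V) (o0 : outcome)
  : outcome := foldl (sweep_step N x) o0 s.

End TCP.
Arguments cpt {V D} t X o.

(* Main.v *)
From Stdlib Require Import FunctionalExtensionality Classical.
Require Import Defs.
From mathcomp Require Import all_boot.

Section Proofs.
Variables (V : finType) (D : V -> finType) (N : tcpnet D).

Lemma upd_in (o : outcome D) X (a : D X) : upd o a X = a.
Proof. exact: dfwith_in. Qed.

Lemma upd_out (o : outcome D) X (a : D X) Y : X != Y -> upd o a Y = o Y.
Proof. exact: dfwith_out. Qed.

Lemma upd_id (o : outcome D) X : upd o (o X) = o.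
Proof.
apply: functional_extensionality_dep => Y; rewrite /upd.
by case: dfwithP.
Qed.

Lemma sweep_inv (hcpt : forall X (o1 o2 : outcome D), (forall Y, cp N Y X -> o1 Y = o2 Y) ->
     forall a b, cpt N X o1 a b = cpt N X o2 a b)
  (hgreat : forall (X : V) (o : outcome D), has_greatest (cpt N X o))
  (x : passign D) (s : seq V) (hs : topo_order N s) (o0 : outcome D) n :
  n <= size s ->
  let on := foldl (sweep_step N x) o0 (take n s) in
  forall X, index X s < n ->
   (forall a, x X = Some a -> on X = a) /\
   (x X = None -> forall a, a != on X -> cpt N X on (on X) a).
Proof.
case: hs => us alls tops.
elim: n => [|n IH] hn; first by cbv zeta.
cbv zeta; move=> X.
rewrite (take_nth X hn) -cats1 foldl_cat /=.
have IH2 := IH (ltnW hn); cbv zeta in IH2.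
set op := foldl _ _ _ in IH2 *.
set Z := nth X s n.
set on := sweep_step N x op Z.
have iZ : index Z s = n by rewrite index_uniq.
have [g [hs1 [hg eon]]] : exists g : D Z, (forall a, x Z = Some a -> g = a) /\
      (x Z = None -> forall a, a != g -> cpt N Z op g a)
      /\ on = upd op g.
  rewrite /on /sweep_step; case: (x Z) => [a|]; first by exists a; split=> // b [].
  rewrite /greatest_of; case: pickP => [g /forallP Hg|H].
    exists g; split=> //; split=> // _ a ag; exact: (implyP (Hg a) ag).
  exfalso; case: (hgreat Z op) => g Hg; move: (H g) => /negP; apply.
  by apply/forallP => a; apply/implyP => ag; apply: Hg.
clearbody on.
have parents Y W : index W s <= n -> cp N Y W -> Z != Y.
  move=> hW hc; apply/eqP => eZ; have := tops _ _ hc; rewrite -eZ iZ.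
  by rewrite ltnNge hW.
have eqcpt W : index W s <= n -> forall a b, cpt N W on a b = cpt N W op a b.
  move=> hW; apply: hcpt => Y hc; rewrite eon upd_out //; exact: parents hc.
rewrite ltnS leq_eqVlt => /orP [/eqP eX|lX].
  have eXZ : X = Z by rewrite /Z -eX nth_index.
  rewrite eXZ; split.
    move=> a ha; rewrite eon upd_in; exact: hs1.
  move=> hx a; rewrite eqcpt ?iZ // eon upd_in => ag; exact: hg.
have nZX : Z != X by apply/eqP => eZ; move: lX; rewrite -eZ iZ ltnn.
have [IH1 IH3] := IH2 X lX.
rewrite eon upd_out //; split=> // hx a ha.
rewrite -eon eqcpt ?(ltnW lX) //; apply: IH3 => //.
Qed.

End Proofs.

Theorem corollary1 (V : finType) (D : V -> finType) (N : tcpnet D)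
  (hwf : wf_tcpnet N) (hacyc : cond_acyclic N)
  (hgreat : forall (X : V) (o : outcome D), has_greatest (cpt N X o))
  (x : passign D) (s : seq V) (hs : topo_order N s) (o0 : outcome D) :
  let o := forward_sweep N x s o0 in
  Comp x o /\ (forall o' : outcome D, Comp x o' -> o' <> o -> entails N o o').
Proof.
move=> o.
case: hwf => _ [_ [_ [_ [_ [_ [_ [hcpt _]]]]]]].
have Hinv := @sweep_inv V D N hcpt hgreat x s hs o0 (size s) (leqnn (size s)).
rewrite take_size in Hinv; cbv zeta in Hinv.
case: hs => us alls tops.
have all_i X : index X s < size s by rewrite index_mem.
have Co : Comp x o by move=> v a hv; exact: (Hinv v (all_i v)).1 a hv.
have Gr X : x X = None -> forall a, a != o X -> cpt N X o (o X) a.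
  exact: (Hinv X (all_i X)).2.
split => // o' Co' neq R [Rirr Rtr] [Rcpt _].
suff main : forall n (o1 : outcome D), #|[set v | o1 v != o v]| <= n -> Comp x o1 ->
   o1 <> o -> R o o1 by exact: (main _ o' (leqnn _)).
elim=> [|n IH] o1 hc C1 ne1.
  exfalso; apply: ne1; apply: functional_extensionality_dep => v.
  apply/eqP; apply: negbNE; apply/negP => hv.
  have : v \in [set v | o1 v != o v] by rewrite inE.
  by move: hc; rewrite leqn0 cards_eq0 => /eqP ->; rewrite inE.
case: (pickP [pred v | o1 v != o v]) => [v hv|H]; last first.
  exfalso; apply: ne1; apply: functional_extensionality_dep => v.
  by apply/eqP; apply: negbNE; move: (H v) => /= ->.
case: (@arg_minnP V v [pred v | o1 v != o v] (fun v => index v s) hv) => X hX hmin.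
have hxX : x X = None.
  case hx: (x X) => [a|] //; exfalso.
  by move: hX; rewrite /= (C1 _ _ hx) (Co _ _ hx) eqxx.
have par Y : cp N Y X -> o1 Y = o Y.
  move=> hc'; apply/eqP; apply: negbNE; apply/negP => hY.
  have := hmin Y hY; have := tops _ _ hc'; rewrite /=.
  by move=> h1 h2; move: (leq_trans h1 h2); rewrite ltnn.
have hcp : cpt N X o1 (o X) (o1 X).
  rewrite (hcpt X o1 o par); apply: Gr => //; by rewrite eq_sym.
have R2 := Rcpt X o1 _ _ hcp; rewrite upd_id in R2.
set o2 := upd o1 (o X) in R2.
have [e2|ne2] := Classical_Prop.classic (o2 = o); first by rewrite -e2.
apply: (Rtr _ o2) => //; apply: IH => //.
- have sub : [set v | o2 v != o v] \subset [set v | o1 v != o v] :\ X.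
    apply/subsetP => w; rewrite !inE.
    have [->|nXv] := eqVneq w X; first by rewrite /o2 upd_in eqxx.
    by rewrite /o2 upd_out 1?eq_sym // nXv.
  apply: leq_trans (subset_leq_card sub) _.
  by move: hc; rewrite (cardsD1 X) inE (hX : o1 X != o X).
- move=> w a hva; rewrite /o2.
  have [eX|nXv] := eqVneq X w; first by subst w; rewrite hxX in hva.
  by rewrite upd_out //; apply: C1.
Qed.
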